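(* Let $G$ and $H$ be topological groups satisfying one of the following two conditions: (i) the torsion part of $G$ is dense in $G$ and the completion $\hat{H}$ is torsion-free; (ii) there exists $n\in\mathbb{N}$ such that $\hat{G}^{(n)}=\hat{G}$ and $H^{(n)}=\{e\}$. If two $G^{\star\star}$-regular spaces $X$ and $Y$ are $(G\times H)$-equivalent, then they are both $G$-equivalent and $H$-equivalent.
   Context: All spaces are Tychonoff and non-empty; all topological groups are Hausdorff; $e$ denotes the identity. $\hat{K}$ denotes the completion of a topological group $K$ with respect to the two-sided uniformity. The torsion part of a group $K$ is the set of $g\in K$ with $g^m=e$ for some $m\ge1$; $K$ is torsion-free if its torsion part is $\{e\}$. For $n\in\mathbb{N}$, $K^{(n)}=\{g^n:g\in K\}$. $C_p(X,K)$ is the group of continuous maps $X\to K$ with pointwise operations and topology of pointwise convergence; $X,Y$ are $K$-equivalent if $C_p(X,K)\cong C_p(Y,K)$ as topological groups. $X$ is $G^{\star\star}$-regular if for every closed $F\subseteq X$, every $x\in X\setminus F$ and every $g\in G$ there is $f\in C_p(X,G)$ with $f(x)=g$ and $f(F)\subseteq\{e\}$. *)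

(* Defs.v *)
From HB Require Import structures.
From mathcomp Require Import all_boot all_order all_algebra.
From mathcomp Require Import all_classical all_reals all_analysis.
From mathcomp Require Import Rstruct Rstruct_topology.
From Stdlib Require Import Rdefinitions.

Set Implicit Arguments.
Unset Strict Implicit.
Unset Printing Implicit Defensive.

Local Open Scope classical_set_scope.

Definition tychonoff_space (X : topologicalType) : Prop :=
  accessible_space X /\
  forall (F : set X) (x : X), closed F -> ~ F x ->
    exists f : X -> Rdefinitions.R,
      continuous f /\ f x = 0%R /\ (forall z, F z -> f z = 1%R).

Record tgData := TGData {
  tg_car :> topologicalType;
  tg_mul : tg_car -> tg_car -> tg_car;
  tg_inv : tg_car -> tg_car;
  tg_one : tg_car }.

Arguments tg_mul {_}.
Arguments tg_inv {_}.
Arguments tg_one {_}.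

Definition topological_group (K : tgData) : Prop :=
  [/\ (forall a b c : K, tg_mul a (tg_mul b c) = tg_mul (tg_mul a b) c),
      (forall a : K, tg_mul tg_one a = a /\ tg_mul a tg_one = a),
      (forall a : K, tg_mul (tg_inv a) a = tg_one /\ tg_mul a (tg_inv a) = tg_one),
      continuous (fun p : K * K => tg_mul p.1 p.2) /\ continuous (@tg_inv K) &
      hausdorff_space K].

Definition tg_pow (K : tgData) (g : K) (m : nat) : K := iter m (tg_mul g) tg_one.

Definition torsion_part (K : tgData) : set K :=
  [set g | exists m : nat, (0 < m)%N /\ tg_pow g m = tg_one].

Definition torsion_free (K : tgData) : Prop := @torsion_part K = [set tg_one].

Definition nth_powers (K : tgData) (n : nat) : set K := [set x | exists g : K, tg_pow g n = x].

Definition prod_tg (G H : tgData) : tgData :=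
  @TGData (tg_car G * tg_car H)%type
    (fun a b => (tg_mul a.1 b.1, tg_mul a.2 b.2))
    (fun a => (tg_inv a.1, tg_inv a.2))
    (tg_one, tg_one).

Definition two_sided_ent (K : tgData) (U : set K) : set (K * K) :=
  [set p | U (tg_mul (tg_inv p.1) p.2) /\ U (tg_mul p.2 (tg_inv p.1))].

Definition two_sided_cauchy (K : tgData) (F : set_system K) : Prop :=
  forall U : set K, nbhs (@tg_one K) U ->
    exists2 A, F A & A `*` A `<=` two_sided_ent U.

Definition raikov_complete (K : tgData) : Prop :=
  forall F : set_system K, ProperFilter F -> two_sided_cauchy F ->
    exists x : K, nbhs x `<=` F.

Definition is_completion (K Kc : tgData) (iota : K -> Kc) : Prop :=
  [/\ topological_group Kc /\ raikov_complete Kc,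
      (forall a b : K, iota (tg_mul a b) = tg_mul (iota a) (iota b)),
      injective iota /\ continuous iota,
      (forall U : set K, open U -> exists2 V : set Kc, open V & iota @^-1` V = U) &
      dense (range iota)].

Definition Cp (X : topologicalType) (K : tgData) : topologicalType :=
  set_type [set f : {ptws X -> K} | continuous (f : X -> K)].

Definition Cp_val (X : topologicalType) (K : tgData) (f : Cp X K) : X -> K :=
  (projT1 f : {ptws X -> K}).

Definition Cp_hom (X Y : topologicalType) (K : tgData) (Phi : Cp X K -> Cp Y K) : Prop :=
  forall f g h : Cp X K,
    (forall x, Cp_val h x = tg_mul (Cp_val f x) (Cp_val g x)) ->
    forall y, Cp_val (Phi h) y = tg_mul (Cp_val (Phi f) y) (Cp_val (Phi g) y).

Definition K_equivalent (K : tgData) (X Y : topologicalType) : Prop :=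
  exists (Phi : Cp X K -> Cp Y K) (Psi : Cp Y K -> Cp X K),
    [/\ cancel Phi Psi, cancel Psi Phi, Cp_hom Phi,
        continuous Phi & continuous Psi].

Definition Gss_regular (G : tgData) (X : topologicalType) : Prop :=
  forall (F : set X) (x : X) (g : G), closed F -> ~ F x ->
    exists f : X -> G, [/\ continuous f, f x = g & forall z, F z -> f z = tg_one].

(* Main.v *)
Require Import Defs.
From HB Require Import structures.
From mathcomp Require Import all_boot all_order all_algebra finmap.
From mathcomp Require Import all_classical all_reals all_analysis.
Local Open Scope classical_set_scope.
Local Open Scope classical_set_scope.

Set Implicit Arguments.
Unset Strict Implicit.
Unset Printing Implicit Defensive.

Definition tgrp (K : tgData) : Prop :=
  [/\ (forall a b c : K, tg_mul a (tg_mul b c) = tg_mul (tg_mul a b) c),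
      (forall a : K, tg_mul tg_one a = a /\ tg_mul a tg_one = a),
      (forall a : K, tg_mul (tg_inv a) a = tg_one /\ tg_mul a (tg_inv a) = tg_one) &
      continuous (fun p : K * K => tg_mul p.1 p.2) /\ continuous (@tg_inv K)].

Lemma tg_tgrp K : topological_group K -> tgrp K.
Proof. by case=> *; split. Qed.

Section TG.
Variable K : tgData.
Hypothesis hK : tgrp K.

Local Notation "a * b" := (tg_mul a b).
Local Notation e := (@tg_one K).

Lemma mA (a b c : K) : a * (b * c) = (a * b) * c.
Proof. by case: hK => h *; apply: h. Qed.
Lemma m1g (a : K) : e * a = a.
Proof. by case: hK => _ h *; case: (h a). Qed.
Lemma mg1 (a : K) : a * e = a.
Proof. by case: hK => _ h *; case: (h a). Qed.
Lemma mVg (a : K) : tg_inv a * a = e.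
Proof. by case: hK => _ _ h *; case: (h a). Qed.
Lemma mgV (a : K) : a * tg_inv a = e.
Proof. by case: hK => _ _ h *; case: (h a). Qed.

Lemma mgI (a b c : K) : a * b = a * c -> b = c.
Proof.
move=> h; rewrite -(m1g b) -(m1g c) -(mVg a) -!mA; congr (_ * _); exact: h.
Qed.

Lemma idem_one (a : K) : a * a = a -> a = e.
Proof. by move=> h; apply: (@mgI a); rewrite h mg1. Qed.

Lemma inv_uniq (a b : K) : a * b = e -> b = tg_inv a.
Proof. by move=> h; apply: (@mgI a); rewrite h mgV. Qed.

Lemma inv_one : tg_inv e = e.
Proof. by symmetry; apply: inv_uniq; rewrite m1g. Qed.

Lemma powS (g : K) m : tg_pow g m.+1 = g * tg_pow g m.
Proof. by []. Qed.

Lemma pow0 (g : K) : tg_pow g 0 = e.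
Proof. by []. Qed.

Lemma powD (g : K) m k : tg_pow g (m + k) = tg_pow g m * tg_pow g k.
Proof.
elim: m => [|m IH]; first by rewrite add0n pow0 m1g.
by rewrite addSn !powS IH mA.
Qed.

Lemma pow1e m : tg_pow e m = e.
Proof. by elim: m => // m IH; rewrite powS IH m1g. Qed.

Lemma powM (g : K) m k : tg_pow g (m * k) = tg_pow (tg_pow g m) k.
Proof.
elim: k => [|k IH]; first by rewrite muln0.
by rewrite mulnS powD IH powS.
Qed.

Lemma cvg_mul T (F : set_system T) (u v : T -> K) (a b : K) : Filter F ->
  u @ F --> a -> v @ F --> b -> (fun z => u z * v z) @ F --> a * b.
Proof.
move=> FF hu hv.
have hp : (fun z => (u z, v z)) @ F --> (a, b) by exact: (cvg_pair hu hv).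
have hc : {for (a, b), continuous (fun p : K * K => p.1 * p.2)}.
  by case: hK => _ _ _ [h _]; exact: h.
exact: (continuous_cvg FF hc hp).
Qed.

Lemma cvg_inv T (F : set_system T) (u : T -> K) (a : K) : Filter F ->
  u @ F --> a -> (fun z => tg_inv (u z)) @ F --> tg_inv a.
Proof.
move=> FF hu.
have hc : {for a, continuous (@tg_inv K)} by case: hK => _ _ _ [_ h]; exact: h.
exact: (continuous_cvg FF hc hu).
Qed.

Lemma cvg_pow T (F : set_system T) (u : T -> K) (a : K) m : Filter F ->
  u @ F --> a -> (fun z => tg_pow (u z) m) @ F --> tg_pow a m.
Proof.
move=> FF hu; elim: m => [|m IH]; first exact: cvg_cst.
exact: cvg_mul.
Qed.

End TG.

Local Open Scope classical_set_scope.
Set Implicit Arguments.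
Unset Strict Implicit.
Unset Printing Implicit Defensive.

Lemma cvg_fst1 (A B : topologicalType) T (F : set_system T) (u : T -> A * B) (p : A * B) :
  Filter F -> u @ F --> p -> (fun z => (u z).1) @ F --> p.1.
Proof.
move=> FF hu.
have hc : {for p, continuous (@fst A B)}.
  by case: p {hu} => a b; apply: cvg_fst.
exact: (continuous_cvg FF hc hu).
Qed.

Lemma cvg_snd1 (A B : topologicalType) T (F : set_system T) (u : T -> A * B) (p : A * B) :
  Filter F -> u @ F --> p -> (fun z => (u z).2) @ F --> p.2.
Proof.
move=> FF hu.
have hc : {for p, continuous (@snd A B)}.
  by case: p {hu} => a b; apply: cvg_snd.
exact: (continuous_cvg FF hc hu).
Qed.

Lemma cvg_pair1 (A B : topologicalType) T (F : set_system T) (u : T -> A) (v : T -> B) (a : A) (b : B) :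
  Filter F -> u @ F --> a -> v @ F --> b -> (fun z => (u z, v z)) @ F --> (a, b).
Proof. move=> FF hu hv; exact: (cvg_pair hu hv). Qed.

Lemma prod_tgrp (G H : tgData) : tgrp G -> tgrp H -> tgrp (prod_tg G H).
Proof.
move=> hG hH; split.
- by move=> a b c /=; rewrite !mA.
- by move=> a /=; rewrite !m1g // !mg1 //; case: a.
- by move=> a /=; rewrite !mVg // !mgV //.
split.
- move=> p /=.
  have FF : Filter (nbhs p) by apply: nbhs_filter.
  have hid : (fun q => q) @ nbhs p --> p by apply: cvg_id.
  have h1 := cvg_fst1 FF hid. have h2 := cvg_snd1 FF hid.
  have h11 := @cvg_fst1 G H _ _ _ _ FF h1.
  have h12 := @cvg_snd1 G H _ _ _ _ FF h1.
  have h21 := @cvg_fst1 G H _ _ _ _ FF h2.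
  have h22 := @cvg_snd1 G H _ _ _ _ FF h2.
  apply: (@cvg_pair1 G H _ (nbhs p) (fun q : prod_tg G H * prod_tg G H => tg_mul q.1.1 q.2.1)
     (fun q : prod_tg G H * prod_tg G H => tg_mul q.1.2 q.2.2)).
  all: try (apply: cvg_mul => //).
- move=> p /=.
  have FF : Filter (nbhs p) by apply: nbhs_filter.
  have hid : (fun q => q) @ nbhs p --> p by apply: cvg_id.
  apply: (@cvg_pair1 G H _ (nbhs p) (fun q : prod_tg G H => tg_inv q.1)
     (fun q : prod_tg G H => tg_inv q.2)).
  + by apply: cvg_inv => //; exact: (@cvg_fst1 G H _ _ _ _ FF hid).
  + by apply: cvg_inv => //; exact: (@cvg_snd1 G H _ _ _ _ FF hid).
Qed.

Local Open Scope classical_set_scope.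
Set Implicit Arguments.
Unset Strict Implicit.
Unset Printing Implicit Defensive.

Lemma ptws_cvg (X : Type) (K : topologicalType) (F : set_system {ptws X -> K})
  (f : {ptws X -> K}) : Filter F ->
  (forall x, (fun g : {ptws X -> K} => g x) @ F --> f x) -> F --> f.
Proof.
move=> FF h; apply/cvg_sup => x.
move=> A /= [_ [[B Bop <-] Bfs sBfA]].
rewrite nbhs_filterE; apply: filterS sBfA _; apply: (h x).
by apply: open_nbhs_nbhs; split.
Qed.

Lemma ptws_cvg_at (X : topologicalType) (K : topologicalType) T (F : set_system T)
  (u : T -> {ptws X -> K}) (f : {ptws X -> K}) : Filter F ->
  u @ F --> f -> forall x, (fun t => u t x) @ F --> f x.
Proof.
move=> FF hu x.
have hc : {for f, continuous (fun g : {ptws X -> K} => g x)}.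
  exact: (@proj_continuous X (fun _ => K) x f).
exact: (continuous_cvg FF hc hu).
Qed.

Section CpSec.
Variables (X : topologicalType) (K : tgData).

Definition cv (c : Cp X K) : {ptws X -> K} := projT1 c.

Lemma cv_cont : continuous cv.
Proof.
move=> a. exact: (@initial_continuous _ {ptws X -> K} set_val a).
Qed.

Lemma Cp_cvg T (F : set_system T) (u : T -> Cp X K) (a : Cp X K) : Filter F ->
  (forall x, (fun t => Cp_val (u t) x) @ F --> Cp_val a x) -> u @ F --> a.
Proof.
move=> FF h A /= [_ [[B Bop <-] Bfs sBfA]].
have hc : (fun t => cv (u t)) @ F --> cv a.
  by apply: ptws_cvg => //.
rewrite nbhs_filterE; apply: (@filterS _ _ _ (u @^-1` (set_val @^-1` B))).
  by move=> t /sBfA.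
by apply: hc; apply: open_nbhs_nbhs; split.
Qed.

Lemma Cp_cvg_at T (F : set_system T) (u : T -> Cp X K) (a : Cp X K) : Filter F ->
  u @ F --> a -> forall x, (fun t => Cp_val (u t) x) @ F --> Cp_val a x.
Proof.
move=> FF hu.
have hc : (fun t => cv (u t)) @ F --> cv a.
  exact: (continuous_cvg FF (@cv_cont a) hu).
exact: (ptws_cvg_at FF hc).
Qed.

Lemma Cp_ext (c d : Cp X K) : (forall x, Cp_val c x = Cp_val d x) -> c = d.
Proof.
move: c d => [f hf] [g hg] /= h.
have efg : f = g by apply: funext.
subst g; congr exist; exact: Prop_irrelevance.
Qed.

Definition mkCp (f : X -> K) (hf : continuous f) : Cp X K :=
  @exist {ptws X -> K} _ (f : {ptws X -> K}) (mem_set hf).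

Lemma mkCpE f hf x : Cp_val (@mkCp f hf) x = f x.
Proof. by []. Qed.

Lemma Cp_cont (c : Cp X K) : continuous (Cp_val c).
Proof. case: c => f hf; exact: (set_mem hf). Qed.

End CpSec.

Local Open Scope classical_set_scope.
Set Implicit Arguments.
Unset Strict Implicit.
Unset Printing Implicit Defensive.

Lemma cont_mul2 (T : topologicalType) (K : tgData) (hK : tgrp K) (f g : T -> K) :
  continuous f -> continuous g -> continuous (fun z => tg_mul (f z) (g z)).
Proof.
move=> hf hg z; apply: (cvg_mul hK) => //; [exact: hf | exact: hg].
Qed.

Lemma cont_inv1 (T : topologicalType) (K : tgData) (hK : tgrp K) (f : T -> K) :
  continuous f -> continuous (fun z => tg_inv (f z)).
Proof. by move=> hf z; apply: (cvg_inv hK) => //; exact: hf. Qed.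

Section CpOps.
Variables (X : topologicalType) (K : tgData).
Hypothesis hK : tgrp K.

Definition mulCp (c d : Cp X K) : Cp X K :=
  mkCp (cont_mul2 hK (@Cp_cont X K c) (@Cp_cont X K d)).
Definition invCp (c : Cp X K) : Cp X K := mkCp (cont_inv1 hK (@Cp_cont X K c)).
Definition oneCp : Cp X K := @mkCp X K (fun _ => tg_one) (@cst_continuous X K tg_one).
Fixpoint powCp (c : Cp X K) (m : nat) : Cp X K :=
  if m is m'.+1 then mulCp c (powCp c m') else oneCp.

Lemma mulCpE c d x : Cp_val (mulCp c d) x = tg_mul (Cp_val c x) (Cp_val d x).
Proof. by []. Qed.
Lemma invCpE c x : Cp_val (invCp c) x = tg_inv (Cp_val c x).
Proof. by []. Qed.
Lemma oneCpE x : Cp_val oneCp x = tg_one.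
Proof. by []. Qed.
Lemma powCpE c m x : Cp_val (powCp c m) x = tg_pow (Cp_val c x) m.
Proof. by elim: m => // m IH; rewrite /= mulCpE IH. Qed.

End CpOps.

Lemma Cp_map_cont (X : topologicalType) (K1 K2 : tgData) (Th : Cp X K1 -> Cp X K2)
  (th : K1 -> K2) : continuous th ->
  (forall c x, Cp_val (Th c) x = th (Cp_val c x)) -> continuous Th.
Proof.
move=> hth hT c; apply: (Cp_cvg (nbhs_filter c)) => x.
under eq_fun do rewrite hT. rewrite hT.
have hc := @Cp_cvg_at X K1 _ (nbhs c) id c (nbhs_filter c) (@cvg_id _ (nbhs c)) x.
exact: (continuous_cvg _ (hth _) hc).
Qed.

Section Hom.
Variables (X Y : topologicalType) (K : tgData).
Hypothesis hK : tgrp K.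
Variable Phi : Cp X K -> Cp Y K.
Hypothesis hPhi : Cp_hom Phi.

Lemma hom_mul c d : Phi (mulCp hK c d) = mulCp hK (Phi c) (Phi d).
Proof. by apply: Cp_ext => y; rewrite mulCpE; apply: hPhi. Qed.

Lemma hom_one : Phi (oneCp X K) = oneCp Y K.
Proof.
apply: Cp_ext => y; rewrite oneCpE; apply: (idem_one hK).
have := hom_mul (oneCp X K) (oneCp X K).
have -> : mulCp hK (oneCp X K) (oneCp X K) = oneCp X K.
  by apply: Cp_ext => x; rewrite mulCpE oneCpE m1g.
by move=> E; rewrite {3}E mulCpE.
Qed.

Lemma hom_inv c : Phi (invCp hK c) = invCp hK (Phi c).
Proof.
apply: Cp_ext => y; rewrite invCpE; apply: (inv_uniq hK).
have := hom_mul c (invCp hK c).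
have -> : mulCp hK c (invCp hK c) = oneCp X K.
  by apply: Cp_ext => x; rewrite mulCpE invCpE oneCpE mgV.
by rewrite hom_one => /(congr1 (fun d => Cp_val d y)); rewrite mulCpE oneCpE.
Qed.

Lemma hom_pow c m : Phi (powCp hK c m) = powCp hK (Phi c) m.
Proof. by elim: m => [|m IH] /=; rewrite ?hom_one // hom_mul IH. Qed.

End Hom.

Local Open Scope classical_set_scope.
Set Implicit Arguments.
Unset Strict Implicit.
Unset Printing Implicit Defensive.

Lemma ptws_basis (X K : topologicalType) (f : {ptws X -> K}) (N : set {ptws X -> K}) :
  nbhs f N -> exists ps : seq (X * set K),
    (forall p, List.In p ps -> open p.2 /\ p.2 (f p.1)) /\
    (forall g : {ptws X -> K}, (forall p, List.In p ps -> p.2 (g p.1)) -> N g).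
Proof.
move=> [/= W [[/= B + <-] [V BV Vf BN]]] => /(_ V BV) [] /= F Fsup Veq.
have Fall : forall w, w \in F -> exists p : X * set K, open p.2 /\ w = (fun g => p.2 (g p.1)).
  move=> w /Fsup; rewrite inE => -[i _ [A oA <-]].
  by exists (i, A).
have Ff : forall w, w \in F -> w f.
  by move=> w wF; rewrite -Veq in Vf; apply: Vf.
have key : forall s : seq ((X -> K) -> Prop), {subset s <= F} ->
  exists ps : seq (X * set K),
    (forall p, List.In p ps -> open p.2 /\ p.2 (f p.1)) /\
    (forall g : X -> K, (forall p, List.In p ps -> p.2 (g p.1)) -> forall w, w \in s -> w g).
  elim=> [|w s IH] sF.
    by exists [::]; split => // g _ w; rewrite in_nil.
  have [|ps [h1 h2]] := IH.
    by move=> u us; apply: sF; rewrite inE us orbT.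
  have wF : w \in F by apply: sF; rewrite inE eqxx.
  have [p [op ep]] := Fall w wF.
  exists (p :: ps); split.
    move=> q [<-|/h1] //; split => //.
    by have := Ff w wF; rewrite ep.
  move=> g hg u; rewrite inE => /orP [/eqP ->|us].
    by rewrite ep; apply: hg; left.
  by apply: h2 => // q qps; apply: hg; right.
have [ps [h1 h2]] := key F (fun u h => h).
exists ps; split => // g hg; apply: BN; exists V => //.
by rewrite -Veq => w /= wF; apply: (h2 g hg).
Qed.

Lemma Cp_nbhs (X : topologicalType) (K : tgData) (a : Cp X K) (N : set (Cp X K)) :
  nbhs a N -> exists M : set {ptws X -> K}, nbhs (cv a) M /\ forall c, M (cv c) -> N c.
Proof.
move=> [_ [[B Bop <-] Bfs sBfA]].
exists B; split; first by apply: open_nbhs_nbhs; split.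
by move=> c Bc; apply: sBfA.
Qed.

Lemma list_closed (X : topologicalType) (hX : accessible_space X) (xs : seq X) :
  closed [set z | List.In z xs].
Proof.
elim: xs => [|x xs IH].
  by rewrite (_ : [set z | List.In z [::]] = set0); [exact: closed0|
    by apply/seteqP; split => z].
rewrite (_ : [set z | List.In z (x :: xs)] = [set x] `|` [set z | List.In z xs]).
  by apply: closedU => //; exact: accessible_closed_set1.
by apply/seteqP; split => z /= [->|h]; [left|right|left|right].
Qed.

Lemma interp (G : tgData) (hG : tgrp G) (X : topologicalType) (hX : accessible_space X)
  (hreg : Gss_regular G X) (xs : seq X) (v : X -> G) :
  exists b : X -> G, continuous b /\ forall x, List.In x xs -> b x = v x.
Proof.
elim: xs => [|x xs [b' [cb' hb']]].
  by exists (fun _ => tg_one); split => //; exact: cst_continuous.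
have [xin|xnin] := pselect (List.In x xs).
  by exists b'; split => // z [<-|]; [exact: hb'|exact: hb'].
have [h [ch hx hF]] := hreg [set z | List.In z xs] x (tg_mul (v x) (tg_inv (b' x)))
  (@list_closed X hX xs) xnin.
exists (fun z => tg_mul (h z) (b' z)); split.
  exact: cont_mul2.
move=> z [<-|zin].
  by rewrite hx -(mA hG) (mVg hG) (mg1 hG).
by rewrite hF // (m1g hG) hb'.
Qed.

Local Open Scope classical_set_scope.
Set Implicit Arguments.
Unset Strict Implicit.
Unset Printing Implicit Defensive.

Section HomTG.
Variables (K1 K2 : tgData) (hK1 : tgrp K1) (hK2 : tgrp K2) (io : K1 -> K2).
Hypothesis hio : forall a b, io (tg_mul a b) = tg_mul (io a) (io b).

Lemma io_one : io tg_one = tg_one.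
Proof. by apply: (idem_one hK2); rewrite -hio (m1g hK1). Qed.

Lemma io_pow g m : io (tg_pow g m) = tg_pow (io g) m.
Proof. by elim: m => [|m IH]; rewrite ?io_one // !powS hio IH. Qed.

Lemma io_inv g : io (tg_inv g) = tg_inv (io g).
Proof. by apply: (inv_uniq hK2); rewrite -hio (mgV hK1) io_one. Qed.
End HomTG.

Lemma open_sub (T : topologicalType) (c : T) (O : set T) : nbhs c O ->
  exists U1, [/\ open U1, U1 c & U1 `<=` O].
Proof. by rewrite nbhsE => -[B [oB Bc] BO]; exists B. Qed.

Lemma approx_pow (G Gc : tgData) (hG : tgrp G) (iG : G -> Gc) (hGc : is_completion iG)
  n (hn : @nth_powers Gc n = setT) (c : G) (O : set G) :
  nbhs c O -> exists g, O (tg_pow g n).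
Proof.
case: hGc => [[tGc _] hom [_ _] emb dns].
have hGc := tg_tgrp tGc.
move=> /open_sub [U1 [oU Uc UO]].
have [V oV VU] := emb U1 oU.
have Vc : V (iG c) by rewrite -VU in Uc.
have : [set: Gc] (iG c) by [].
rewrite -hn => -[d hd].
have Wn : nbhs d [set d' | V (tg_pow d' n)].
  have hp : (fun z => tg_pow z n) @ nbhs d --> tg_pow d n.
    exact: (cvg_pow hGc (nbhs_filter d) (@cvg_id _ (nbhs d))).
  apply: hp; apply: open_nbhs_nbhs; split => //; by rewrite hd.
have [z [/interior_subset Wz [g _ gz]]] : (interior [set d' | V (tg_pow d' n)]) `&` range iG !=set0.
  apply: dns; last exact: open_interior.
  by exists d; exact: nbhs_singleton (nbhs_interior Wn).
exists g; apply: UO; rewrite -VU /=.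
by rewrite (io_pow hG hGc hom) gz.
Qed.

Local Open Scope classical_set_scope.
Set Implicit Arguments.
Unset Strict Implicit.
Unset Printing Implicit Defensive.

Lemma list_nbhs (X T : topologicalType) (k0 : T) (P : list (X * set T)) x :
  (forall p, List.In p P -> p.1 = x -> nbhs k0 p.2) ->
  nbhs k0 (fun k => forall p, List.In p P -> p.1 = x -> p.2 k).
Proof.
elim: P => [|q P IH] h.
  by apply: nearW => k p [].
have h1 : nbhs k0 (fun k => forall p, List.In p P -> p.1 = x -> p.2 k).
  by apply: IH => p pP; apply: h; right.
have [qx|qx] := pselect (q.1 = x).
  have h2 : nbhs k0 q.2 by apply: h => //; left.
  apply: filterS (filterI h1 h2) => k [k1 k2] p [<-|pP]; [by [] | exact: k1].
apply: filterS h1 => k k1 p [<-|pP]; [by move/qx | exact: k1].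
Qed.

Section ProdSec.
Variables (G H : tgData) (hG : tgrp G) (hH : tgrp H).
Local Notation K := (prod_tg G H).
Definition hK := prod_tgrp hG hH.

Lemma pow_pair (k : K) m : tg_pow k m = (tg_pow k.1 m, tg_pow k.2 m).
Proof. by elim: m => // m IH; rewrite !powS IH. Qed.

Definition SX (X : topologicalType) (c : Cp X K) := forall x, (Cp_val c x).2 = tg_one.

Lemma pairE (k : K) : k.2 = tg_one -> k = (k.1, tg_one).
Proof. by case: k => a b /= ->. Qed.

Lemma cont_pair_one (X : topologicalType) (b : X -> G) : continuous b ->
  continuous (fun z => ((b z, tg_one) : K)).
Proof.
move=> cb z.
exact: (@cvg_pair1 G H _ (nbhs z) b (fun _ => tg_one) _ _ (nbhs_filter z) (cb z)
  (cvg_cst _)).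
Qed.

Lemma interpK (X : topologicalType) (hX : accessible_space X) (hreg : Gss_regular G X)
  (xs : seq X) (v : X -> G) :
  exists b : Cp X K, SX b /\ forall x, List.In x xs -> Cp_val b x = (v x, tg_one).
Proof.
have [b1 [cb1 hb1]] := interp hG hX hreg xs v.
exists (@mkCp X K _ (cont_pair_one cb1)); split => // x xin.
by rewrite mkCpE hb1.
Qed.

Lemma pair_nbhs (c : G) (C : set K) : nbhs ((c, tg_one) : K) C ->
  nbhs c [set g | C (g, tg_one)].
Proof.
move=> hC.
have hp : (fun g => ((g, tg_one) : K)) @ nbhs c --> ((c, tg_one) : K).
  exact: (@cvg_pair1 G H _ (nbhs c) id (fun _ => tg_one) _ _ (nbhs_filter c)
    (@cvg_id _ (nbhs c)) (cvg_cst _)).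
exact: hp.
Qed.

Lemma eval_snd_cvg (X Y : topologicalType) (Phi : Cp X K -> Cp Y K)
  (cP : continuous Phi) (a : Cp X K) (y : Y) :
  (fun c => (Cp_val (Phi c) y).2) @ nbhs a --> (Cp_val (Phi a) y).2.
Proof.
have h2 := @Cp_cvg_at Y K _ (nbhs a) Phi (Phi a) (nbhs_filter a) (cP a) y.
exact: (cvg_snd1 (nbhs_filter a) h2).
Qed.

Lemma key2 (X Y : topologicalType) (hX : accessible_space X) (hreg : Gss_regular G X)
  (Phi : Cp X K -> Cp Y K) (hP : Cp_hom Phi) (cP : continuous Phi)
  (Gc : tgData) (iG : G -> Gc) (hGc : is_completion iG) n
  (hn : @nth_powers Gc n = setT) (hHn : @nth_powers H n = [set tg_one])
  (hsH : hausdorff_space H) (a : Cp X K) : SX a -> SX (Phi a).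
Proof.
move=> Sa y; apply: hsH => A B nA nB.
exists tg_one; split; last exact: nbhs_singleton nB.
have NA : nbhs a [set c | A (Cp_val (Phi c) y).2] := eval_snd_cvg cP nA.
have [M [nM hM]] := Cp_nbhs NA.
have [ps [h1 h2]] := ptws_basis nM.
pose C x := fun k : K => forall p, List.In p ps -> p.1 = x -> p.2 k.
have Cn : forall x, nbhs (Cp_val a x) (C x).
  move=> x; apply: list_nbhs => p pps px; rewrite -px.
  by have [op ap] := h1 p pps; apply: open_nbhs_nbhs; split.
have exg : forall x, exists g : G, C x (tg_pow g n, tg_one).
  move=> x; have := @approx_pow G Gc hG iG hGc n hn (Cp_val a x).1 [set g | C x (g, tg_one)].
  apply; apply: (@pair_nbhs (Cp_val a x).1 (C x)).
  by rewrite -pairE //; exact: Cn.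
have [gf hgf] := choice exg.
have [b [Sb hb]] := interpK hX hreg (map fst ps) gf.
have powH : forall h : H, tg_pow h n = tg_one.
  by move=> h; have : [set tg_one] (tg_pow h n) by rewrite -hHn; exists h.
have HA : A (Cp_val (Phi (powCp hK b n)) y).2.
  apply: (hM (powCp hK b n)); apply: h2 => p pps.
  rewrite /cv -/(Cp_val (powCp hK b n) p.1) powCpE hb; last first.
    by apply: List.in_map.
  rewrite pow_pair /= (pow1e hH).
  by apply: (hgf p.1).
by move: HA; rewrite (hom_pow hK hP) powCpE pow_pair /= powH.
Qed.

End ProdSec.

Local Open Scope classical_set_scope.
Set Implicit Arguments.
Unset Strict Implicit.
Unset Printing Implicit Defensive.

Lemma Cp_nbhs_open (X : topologicalType) (K : tgData) (a : Cp X K) (N : set (Cp X K)) :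
  nbhs a N -> exists M : set {ptws X -> K},
    [/\ open M, M (cv a) & forall c, M (cv c) -> N c].
Proof.
move=> [_ [[B Bop <-] Bfs sBfA]].
by exists B; split => // c Bc; apply: sBfA.
Qed.

Lemma foldr_pos (X : Type) (xs : seq X) (f : X -> nat) : (forall x, 0 < f x)%N ->
  (0 < foldr (fun x acc => f x * acc) 1 xs)%N.
Proof. by move=> hf; elim: xs => //= x xs IH; rewrite muln_gt0 hf IH. Qed.

Lemma foldr_dvd (X : Type) (xs : seq X) (f : X -> nat) x : List.In x xs ->
  exists j, foldr (fun x acc => f x * acc)%N 1%N xs = (f x * j)%N.
Proof.
elim: xs => //= z xs IH [->|/IH [j ->]]; first by eexists.
by exists (f z * j)%N; rewrite mulnCA.
Qed.

Lemma list_ptws_nbhs (X K : topologicalType) (f : {ptws X -> K}) (xs : seq X)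
  (W : X -> set K) : (forall x, List.In x xs -> nbhs (f x) (W x)) ->
  nbhs f [set g : {ptws X -> K} | forall x, List.In x xs -> W x (g x)].
Proof.
elim: xs => [|x xs IH] h.
  by apply: filterS (@filterT _ _ (nbhs_filter f)) => g _ z [].
have h1 := IH (fun z zin => h z (or_intror zin)).
have h2 : nbhs f ((fun g : {ptws X -> K} => g x) @^-1` W x).
  exact: (@proj_continuous X (fun _ => K) x f (W x) (h x (or_introl erefl))).
by apply: filterS (filterI h1 h2) => g [g1 g2] z [<-|zin] //; apply: g1.
Qed.

Lemma two_sided_nbhs (K : tgData) (hK : tgrp K) (k : K) (S : set K) :
  nbhs tg_one S -> exists W, nbhs k W /\
    forall q q', W q -> W q' -> S (tg_mul (tg_inv q) q') /\ S (tg_mul q' (tg_inv q)).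
Proof.
move=> nS.
have FF : Filter (nbhs ((k, k) : K * K)) by apply: nbhs_filter.
have hid : (fun z => z) @ nbhs ((k, k) : K * K) --> ((k, k) : K * K) by apply: cvg_id.
have c1 := cvg_fst1 FF hid; have c2 := cvg_snd1 FF hid.
have f1 : (fun z : K * K => tg_mul (tg_inv z.1) z.2) @ nbhs ((k, k) : K * K) -->
    tg_mul (tg_inv k) k.
  by apply: cvg_mul => //; apply: cvg_inv.
have f2 : (fun z : K * K => tg_mul z.2 (tg_inv z.1)) @ nbhs ((k, k) : K * K) -->
    tg_mul k (tg_inv k).
  by apply: cvg_mul => //; apply: cvg_inv.
rewrite (mVg hK) in f1; rewrite (mgV hK) in f2.
have [[P1 P2] /= [nP1 nP2] s1] := f1 S nS.
have [[Q1 Q2] /= [nQ1 nQ2] s2] := f2 S nS.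
exists (P1 `&` P2 `&` (Q1 `&` Q2)); split.
  by apply: filterI; apply: filterI.
move=> q q' [[p1 _] [q1 _]] [[_ p2] [_ q2]]; split.
  exact: (s1 (q, q')).
exact: (s2 (q, q')).
Qed.

Local Open Scope classical_set_scope.
Set Implicit Arguments.
Unset Strict Implicit.
Unset Printing Implicit Defensive.

Section Key1.
Variables (G H : tgData) (hG : tgrp G) (hH : tgrp H).
Local Notation K := (prod_tg G H).

Lemma key1 (X Y : topologicalType) (hX : accessible_space X) (hreg : Gss_regular G X)
  (Phi : Cp X K -> Cp Y K) (hP : Cp_hom Phi) (cP : continuous Phi)
  (hden : dense (@torsion_part G))
  (Hc : tgData) (iH : H -> Hc) (hHc : is_completion iH) (htf : torsion_free Hc)
  (hsH : hausdorff_space H) (a : Cp X K) : SX a -> SX (Phi a).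
Proof.
have hKK := hK hG hH.
case: hHc => [[tHc rcHc] homH [injH cH] embH _].
have hHcg := tg_tgrp tHc.
have hsHc : hausdorff_space Hc by case: tHc.
move=> Sa y; apply: hsH => A B nA nB.
pose phi c := (Cp_val (Phi c) y).2.
have NA : nbhs a [set c | A (phi c)] := eval_snd_cvg cP nA.
have [M [oM Ma hM]] := Cp_nbhs_open NA.
have [ps [h1 h2]] := ptws_basis (open_nbhs_nbhs (conj oM Ma)).
pose C x := fun k : K => forall p, List.In p ps -> p.1 = x -> p.2 k.
have Cn : forall x, nbhs (Cp_val a x) (C x).
  move=> x; apply: list_nbhs => p pps px; rewrite -px.
  by have [op ap] := h1 p pps; apply: open_nbhs_nbhs; split.
have exg : forall x, exists tk : G * nat,
    [/\ (0 < tk.2)%N, tg_pow tk.1 tk.2 = tg_one & C x (tk.1, tg_one)].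
  move=> x.
  have nO : nbhs (Cp_val a x).1 [set g | C x (g, tg_one)].
    by apply: pair_nbhs; rewrite -pairE //; exact: Cn.
  have [Oo [oO Ox OC]] := open_sub nO.
  have [t [Ot [k [k0 tk]]]] := hden Oo (ex_intro _ _ Ox) oO.
  by exists (t, k); split => //; apply: OC.
have [tk htk] := choice exg.
pose xs := map fst ps.
pose m := foldr (fun x acc => (tk x).2 * acc)%N 1%N xs.
have m0 : (0 < m)%N by apply: foldr_pos => x; case: (htk x).
pose tau : {ptws X -> K} := fun x =>
  if pselect (List.In x xs) is left _ then ((tk x).1, tg_one) else (tg_one, tg_one).
have tau_in : forall x, List.In x xs -> tau x = ((tk x).1, tg_one).
  by move=> x xin; rewrite /tau; case: pselect.
have tau2 : forall x, (tau x).2 = tg_one by move=> x; rewrite /tau; case: pselect.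
have taum : forall x, tg_pow (tau x) m = tg_one.
  move=> x; rewrite /tau; case: pselect => xin; last exact: (pow1e hKK).
  have [j jm] := foldr_dvd (fun x => (tk x).2) xin.
  by rewrite /m jm (powM hKK) !pow_pair /=; case: (htk x) => _ -> _; rewrite !(pow1e hG) !(pow1e hH).
have Mtau : M tau.
  apply: h2 => p pps; rewrite tau_in; last exact: List.in_map.
  by case: (htk p.1) => _ _; apply.
have nMtau : nbhs tau M by apply: open_nbhs_nbhs.
pose BB : set_system (Cp X K) := fun S =>
  exists M', nbhs tau M' /\ (forall c, M' (cv c) -> S c).
have BBf : Filter BB.
  split.
  - by exists setT; split => //; apply: filterT.
  - move=> S1 S2 [M1 [n1 s1]] [M2 [n2 s2]]; exists (M1 `&` M2); split.
      exact: filterI.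
    by move=> c [c1 c2]; split; [apply: s1|apply: s2].
  - by move=> S1 S2 sub [M1 [n1 s1]]; exists M1; split => // c /s1 /sub.
have BBF : ProperFilter BB.
  split => //.
  move=> [M' [nM' hM']].
  have [ps' [h1' h2']] := ptws_basis nM'.
  have [b [Sb hb]] := interpK H hG hX hreg (map fst ps') (fun x => (tau x).1).
  apply: (hM' b); apply: h2' => p pps.
  rewrite /cv -/(Cp_val b p.1) hb; last exact: List.in_map.
  by rewrite -pairE //; case: (h1' p pps).
have cvx : forall x, (fun c => Cp_val c x) @ BB --> tau x.
  move=> x Oo nO; exists ((fun g : {ptws X -> K} => g x) @^-1` Oo); split.
    exact: (@proj_continuous X (fun _ => K) x tau Oo nO).
  by move=> c.
have cvpow : (fun c => powCp hKK c m) @ BB --> oneCp X K.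
  apply: Cp_cvg => x; rewrite oneCpE.
  have -> : (fun t => Cp_val (powCp hKK t m) x) = (fun t => tg_pow (Cp_val t x) m).
    by apply: funext => t; rewrite powCpE.
  rewrite -(taum x); exact: (cvg_pow hKK BBf (cvx x)).
have cvphim : (fun c => tg_pow (phi c) m) @ BB --> (tg_one : H).
  have h' : (fun c => Phi (powCp hKK c m)) @ BB --> Phi (oneCp X K).
    exact: (continuous_cvg BBf (cP _) cvpow).
  rewrite (hom_one hKK hP) in h'.
  have h2' := @Cp_cvg_at Y K _ BB (fun c => Phi (powCp hKK c m)) (oneCp Y K) BBf h' y.
  have h3 := cvg_snd1 BBf h2'.
  have -> : (fun c => tg_pow (phi c) m) = (fun c => (Cp_val (Phi (powCp hKK c m)) y).2).
    by apply: funext => c; rewrite /phi (hom_pow hKK hP) powCpE pow_pair.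
  exact: h3.
have cauchy : forall U : set H, nbhs tg_one U -> exists S, BB S /\
    forall c c', S c -> S c' ->
      U (tg_mul (tg_inv (phi c)) (phi c')) /\ U (tg_mul (phi c') (tg_inv (phi c))).
  move=> U nU.
  have N0 : nbhs (oneCp X K) [set d | U (phi d)].
    have h := @eval_snd_cvg G H X Y Phi cP (oneCp X K) y.
    rewrite (hom_one hKK hP) oneCpE in h; exact: h.
  have [M0 [oM0 M0a hM0]] := Cp_nbhs_open N0.
  have [ps0 [g1 g2]] := ptws_basis (open_nbhs_nbhs (conj oM0 M0a)).
  pose C0 x := fun k : K => forall p, List.In p ps0 -> p.1 = x -> p.2 k.
  have C0n : forall x, nbhs (tg_one : K) (C0 x).
    move=> x; apply: list_nbhs => p pps px.
    by have [op ap] := g1 p pps; apply: open_nbhs_nbhs; split; rewrite -?px.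
  have exW : forall x, exists W : set K, nbhs (tau x) W /\ forall q q', W q -> W q' ->
      C0 x (tg_mul (tg_inv q) q') /\ C0 x (tg_mul q' (tg_inv q)).
    by move=> x; exact: (two_sided_nbhs hKK (tau x) (C0n x)).
  have [W hW] := choice exW.
  exists (fun c => forall x, List.In x (map fst ps0) -> W x (Cp_val c x)); split.
    exists [set g : {ptws X -> K} | forall x, List.In x (map fst ps0) -> W x (g x)].
    split => //; apply: list_ptws_nbhs => x _; by case: (hW x).
  move=> c c' hc hc'; split.
  - have : [set d | U (phi d)] (mulCp hKK (invCp hKK c) c').
      apply: hM0; apply: g2 => p pps.
      rewrite /cv -/(Cp_val (mulCp hKK (invCp hKK c) c') p.1) mulCpE invCpE.
      have pin : List.In p.1 (map fst ps0) by apply: List.in_map.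
      have [_ hw] := hW p.1.
      by case: (hw _ _ (hc _ pin) (hc' _ pin)) => k1 _; apply: k1.
    by rewrite /= /phi (hom_mul hKK hP) (hom_inv hKK hP) mulCpE invCpE.
  - have : [set d | U (phi d)] (mulCp hKK c' (invCp hKK c)).
      apply: hM0; apply: g2 => p pps.
      rewrite /cv -/(Cp_val (mulCp hKK c' (invCp hKK c)) p.1) mulCpE invCpE.
      have pin : List.In p.1 (map fst ps0) by apply: List.in_map.
      have [_ hw] := hW p.1.
      by case: (hw _ _ (hc _ pin) (hc' _ pin)) => _ k2; apply: k2.
    by rewrite /= /phi (hom_mul hKK hP) (hom_inv hKK hP) mulCpE invCpE.
pose CC := (fun c => iH (phi c)) @ BB.
have CCF : ProperFilter CC by apply: fmap_proper_filter.
have iHe := io_one hH hHcg homH.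
have CCc : two_sided_cauchy CC.
  move=> V nV.
  have nU : nbhs (tg_one : H) (iH @^-1` V).
    by apply: (cH tg_one); rewrite iHe.
  have [S [BS hS]] := cauchy _ nU.
  exists ((fun c => iH (phi c)) @` S).
    by apply: filterS BS => c Sc; exists c.
  move=> [z1 z2] [[c Sc /= e1] [c' Sc' /= e2]]; subst z1 z2.
  rewrite /two_sided_ent /= -!(io_inv hH hHcg homH) -!homH.
  by have [u1 u2] := hS c c' Sc Sc'; split.
have [z hz] := rcHc CC CCF CCc.
have zm : tg_pow z m = tg_one.
  have l1 : (fun c => tg_pow (iH (phi c)) m) @ BB --> tg_pow z m.
    exact: (cvg_pow hHcg BBf hz).
  have l2 : (fun c => tg_pow (iH (phi c)) m) @ BB --> (tg_one : Hc).
    have := continuous_cvg BBf (cH tg_one) cvphim.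
    rewrite iHe => h.
    have -> : (fun c => tg_pow (iH (phi c)) m) = iH \o (fun c => tg_pow (phi c) m).
      by apply: funext => c; rewrite /= (io_pow hH hHcg homH).
    exact: h.
  have PF : ProperFilter ((fun c => tg_pow (iH (phi c)) m) @ BB).
    by apply: fmap_proper_filter.
  exact: (@cvg_unique Hc hsHc _ PF _ _ l1 l2).
have z1 : z = tg_one.
  have : torsion_part z by exists m.
  by rewrite htf => ->.
have phiB : BB (phi @^-1` B).
  have [Oo [oO Oe OB]] := open_sub nB.
  have [V oV VO] := embH Oo oO.
  have Ve : V tg_one by rewrite -VO /= iHe in Oe.
  have CV : CC V by apply: hz; rewrite z1; apply: open_nbhs_nbhs.
  apply: (@filterS _ BB BBf _ _ _ CV) => c /= Vc; apply: OB; rewrite -VO; exact: Vc.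
have phiA : BB (phi @^-1` A).
  by exists M; split => // c /hM.
have [c [Ac Bc]] := @filter_ex _ BB BBF _ (filterI phiA phiB).
by exists (phi c).
Qed.
End Key1.

Local Open Scope classical_set_scope.
Set Implicit Arguments.
Unset Strict Implicit.
Unset Printing Implicit Defensive.

Section Parts.
Variables (G H : tgData) (hG : tgrp G) (hH : tgrp H).
Local Notation K := (prod_tg G H).

Lemma cont_fst : continuous (fun p : K => p.1).
Proof. by move=> p; exact: (cvg_fst1 (nbhs_filter p) (@cvg_id _ (nbhs p))). Qed.
Lemma cont_snd : continuous (fun p : K => p.2).
Proof. by move=> p; exact: (cvg_snd1 (nbhs_filter p) (@cvg_id _ (nbhs p))). Qed.
Lemma cont_inl : continuous (fun g : G => ((g, tg_one) : K)).
Proof.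
move=> g; exact: (@cvg_pair1 G H _ (nbhs g) id (fun _ => tg_one) _ _ (nbhs_filter g)
  (@cvg_id _ (nbhs g)) (cvg_cst _)).
Qed.
Lemma cont_inr : continuous (fun h : H => ((tg_one, h) : K)).
Proof.
move=> h; exact: (@cvg_pair1 G H _ (nbhs h) (fun _ => tg_one) id _ _ (nbhs_filter h)
  (cvg_cst _) (@cvg_id _ (nbhs h))).
Qed.

Section OnX.
Variable X : topologicalType.
Definition inlCp (f : Cp X G) : Cp X K :=
  @mkCp X K (fun x => (Cp_val f x, tg_one))
    (fun x => continuous_comp (@Cp_cont X G f x) (@cont_inl (Cp_val f x))).
Definition inrCp (f : Cp X H) : Cp X K :=
  @mkCp X K (fun x => (tg_one, Cp_val f x))
    (fun x => continuous_comp (@Cp_cont X H f x) (@cont_inr (Cp_val f x))).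
Definition fstCp (c : Cp X K) : Cp X G :=
  @mkCp X G (fun x => (Cp_val c x).1)
    (fun x => continuous_comp (@Cp_cont X K c x) (@cont_fst (Cp_val c x))).
Definition sndCp (c : Cp X K) : Cp X H :=
  @mkCp X H (fun x => (Cp_val c x).2)
    (fun x => continuous_comp (@Cp_cont X K c x) (@cont_snd (Cp_val c x))).

Lemma inlCp_cont : continuous inlCp.
Proof. by apply: (@Cp_map_cont X G K inlCp _ cont_inl). Qed.
Lemma inrCp_cont : continuous inrCp.
Proof. by apply: (@Cp_map_cont X H K inrCp _ cont_inr). Qed.
Lemma fstCp_cont : continuous fstCp.
Proof. by apply: (@Cp_map_cont X K G fstCp _ cont_fst). Qed.
Lemma sndCp_cont : continuous sndCp.
Proof. by apply: (@Cp_map_cont X K H sndCp _ cont_snd). Qed.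
End OnX.

Lemma comp_cont3 (A B C D : topologicalType) (f : A -> B) (g : B -> C) (h : C -> D) :
  continuous f -> continuous g -> continuous h -> continuous (fun a => h (g (f a))).
Proof.
move=> cf cg ch a.
apply: (@continuous_comp _ _ _ (fun a => g (f a)) h a); last exact: (ch (g (f a))).
exact: (@continuous_comp _ _ _ f g a (cf a) (cg (f a))).
Qed.

Lemma parts (X Y : topologicalType) (Phi : Cp X K -> Cp Y K) (Psi : Cp Y K -> Cp X K)
  (c1 : cancel Phi Psi) (c2 : cancel Psi Phi) (hP : Cp_hom Phi) (hPs : Cp_hom Psi)
  (cP : continuous Phi) (cPs : continuous Psi)
  (SP : forall a, SX a -> SX (Phi a)) (SPs : forall b, SX b -> SX (Psi b)) :
  K_equivalent G X Y /\ K_equivalent H X Y.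
Proof.
have hKK := hK hG hH.
have inlS : forall (Z : topologicalType) (f : Cp Z G), SX (inlCp f) by [].
have inl_fst : forall (Z : topologicalType) (c : Cp Z K), SX c -> inlCp (fstCp c) = c.
  by move=> Z c Sc; apply: Cp_ext => z; exact: (esym (pairE (Sc z))).
have decomp : forall (Z : topologicalType) (c : Cp Z K),
    c = mulCp hKK (inlCp (fstCp c)) (inrCp (sndCp c)).
  move=> Z c; apply: Cp_ext => z; rewrite mulCpE.
  change (Cp_val c z = (tg_mul (Cp_val c z).1 (@tg_one G), tg_mul (@tg_one H) (Cp_val c z).2)).
  by rewrite (mg1 hG) (m1g hH); case: (Cp_val c z).
split.
- exists (fun f => fstCp (Phi (inlCp f))), (fun g => fstCp (Psi (inlCp g))); split.
  + move=> f; rewrite inl_fst; last exact: SP.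
    by rewrite c1; apply: Cp_ext.
  + move=> g; rewrite inl_fst; last exact: SPs.
    by rewrite c2; apply: Cp_ext.
  + move=> f g h hfg y.
    have -> : inlCp h = mulCp hKK (inlCp f) (inlCp g).
      apply: Cp_ext => x; rewrite mulCpE.
      change ((Cp_val h x, @tg_one H) = (tg_mul (Cp_val f x) (Cp_val g x), tg_mul (@tg_one H) tg_one)).
      by rewrite hfg (m1g hH).
    by rewrite (hom_mul hKK hP).
  + exact: comp_cont3 (@inlCp_cont X) cP (@fstCp_cont Y).
  + exact: comp_cont3 (@inlCp_cont Y) cPs (@fstCp_cont X).
- exists (fun f => sndCp (Phi (inrCp f))), (fun g => sndCp (Psi (inrCp g))); split.
  + move=> f; apply: Cp_ext => x.
    set c := Phi (inrCp f).
    have := congr1 (fun d : Cp X K => (Cp_val d x).2) (c1 (inrCp f)).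
    rewrite -/c {1}(decomp _ c) (hom_mul hKK hPs) mulCpE /=.
    by rewrite (SPs _ (inlS _ _)) (m1g hH).
  + move=> g; apply: Cp_ext => y.
    set c := Psi (inrCp g).
    have := congr1 (fun d : Cp Y K => (Cp_val d y).2) (c2 (inrCp g)).
    rewrite -/c {1}(decomp _ c) (hom_mul hKK hP) mulCpE /=.
    by rewrite (SP _ (inlS _ _)) (m1g hH).
  + move=> f g h hfg y.
    have -> : inrCp h = mulCp hKK (inrCp f) (inrCp g).
      apply: Cp_ext => x; rewrite mulCpE.
      change ((@tg_one G, Cp_val h x) = (tg_mul (@tg_one G) tg_one, tg_mul (Cp_val f x) (Cp_val g x))).
      by rewrite hfg (m1g hG).
    by rewrite (hom_mul hKK hP).
  + exact: comp_cont3 (@inrCp_cont X) cP (@sndCp_cont Y).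
  + exact: comp_cont3 (@inrCp_cont Y) cPs (@sndCp_cont X).
Qed.

End Parts.

Unset Implicit Arguments.

Theorem theorem3p3
  (G H : tgData) (hG : topological_group G) (hH : topological_group H)
  (Gc : tgData) (iG : G -> Gc) (hGc : is_completion iG)
  (Hc : tgData) (iH : H -> Hc) (hHc : is_completion iH)
  (X Y : topologicalType)
  (tX : tychonoff_space X) (tY : tychonoff_space Y)
  (x0 : X) (y0 : Y) :
  ((dense (@torsion_part G) /\ torsion_free Hc) \/
   (exists n : nat, @nth_powers Gc n = setT /\ @nth_powers H n = [set tg_one])) ->
  Gss_regular G X -> Gss_regular G Y ->
  K_equivalent (prod_tg G H) X Y ->
  K_equivalent G X Y /\ K_equivalent H X Y.
Proof.
move=> hyp rX rY [Phi [Psi [c1 c2 hP cP cPs]]].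
have hGt := tg_tgrp hG; have hHt := tg_tgrp hH.
have hKK := hK hGt hHt.
have hsH : hausdorff_space H by case: hH.
have aX : accessible_space X by case: tX.
have aY : accessible_space Y by case: tY.
have hPs : Cp_hom Psi.
  move=> f g h hfg y.
  have eh : h = Phi (mulCp hKK (Psi f) (Psi g)).
    by apply: Cp_ext => z; rewrite hfg (hom_mul hKK hP) mulCpE !c2.
  by rewrite eh c1 mulCpE.
have [SP SPs] : (forall a, SX a -> SX (Phi a)) /\ (forall b, SX b -> SX (Psi b)).
  case: hyp => [[hden htf]|[n [hn hHn]]]; split => a.
  - exact: (key1 hGt hHt aX rX hP cP hden hHc htf hsH).
  - exact: (key1 hGt hHt aY rY hPs cPs hden hHc htf hsH).
  - exact: (key2 hGt hHt aX rX hP cP hGc hn hHn hsH).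
  - exact: (key2 hGt hHt aY rY hPs cPs hGc hn hHn hsH).
exact: (parts hGt hHt c1 c2 hP hPs cP cPs SP SPs).
Qed.
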